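(* Define \[ \omega(z;q):=\sum_{n=0}^{\infty} \frac{z^n q^{2n^2+2n}}{(q;q^2)_{n+1}\,(zq;q^2)_{n+1}}. \] Then, as formal power series in $q$ whose coefficients are polynomials in $z$ (equivalently, for $|q|<1$ and $|z|$ sufficiently small), \[ \omega(z;q)=\sum_{n=0}^{\infty} \frac{q^n}{(zq;q^2)_{n+1}}. \]
   Context: For $a$ and $q$, $(a;q)_0:=1$, $(a;q)_n:=(1-a)(1-aq)\cdots(1-aq^{n-1})$ for $n\ge1$. *)

(* Defs.v *)
From Stdlib Require Import Reals.
From Coquelicot Require Import Coquelicot.
Open Scope C_scope.

Fixpoint qpoch (a q : C) (n : nat) : C :=
  match n with
  | O => 1
  | S m => qpoch a q m * (1 - a * q ^ m)
  end.

Definition omega_term (z q : C) (n : nat) : C :=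
  z ^ n * q ^ (2 * n * n + 2 * n)
    / (qpoch q (q ^ 2) (S n) * qpoch (z * q) (q ^ 2) (S n)).

Definition rhs_term (z q : C) (n : nat) : C :=
  q ^ n / qpoch (z * q) (q ^ 2) (S n).

(* Main.v *)
Require Import Defs.
From Stdlib Require Import Reals.
From Coquelicot Require Import Coquelicot.
From Stdlib Require Import Lra Psatz Lia.
Open Scope C_scope.

Lemma Cpow_mul_l (x y : C) n : (x * y) ^ n = x ^ n * y ^ n.
Proof. induction n; simpl. ring. rewrite IHn. ring. Qed.

Lemma Cpow_add (x : C) m n : x ^ (m + n) = x ^ m * x ^ n.
Proof. induction m; simpl. ring. rewrite IHm. ring. Qed.

Lemma qpoch_S_shift a p n : qpoch a p (S n) = (1 - a) * qpoch (a * p) p n.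
Proof.
  revert a. induction n; intros a.
  - simpl. ring.
  - change (qpoch a p (S (S n))) with (qpoch a p (S n) * (1 - a * p ^ (S n))).
    rewrite IHn. simpl. ring.
Qed.

Lemma Cmod_1_minus (x : C) : (1 - Cmod x <= Cmod (1 - x))%R.
Proof.
  assert (H := Cmod_triangle (1 - x) x).
  replace (1 - x + x) with (RtoC 1) in H by ring. rewrite Cmod_1 in H. lra.
Qed.

Lemma qpoch_lower a p r n :
  (r < 1)%R -> (forall j, Cmod (a * p ^ j) <= r)%R ->
  ((1 - r) ^ n <= Cmod (qpoch a p n))%R.
Proof.
  intros Hr Hj. induction n; simpl.
  - rewrite Cmod_1. lra.
  - rewrite Cmod_mult. assert (H := Cmod_1_minus (a * p ^ n)). specialize (Hj n).
    assert (0 <= (1 - r) ^ n)%R by (apply pow_le; lra).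
    rewrite Rmult_comm. apply Rmult_le_compat; lra.
Qed.

Lemma qpoch_nz a p r n :
  (r < 1)%R -> (forall j, Cmod (a * p ^ j) <= r)%R -> qpoch a p n <> 0.
Proof.
  intros Hr Hj E. assert (H := qpoch_lower a p r n Hr Hj). rewrite E, Cmod_0 in H.
  assert (0 < (1 - r) ^ n)%R by (apply pow_lt; lra). lra.
Qed.

Lemma series_unique_C (f : nat -> C) l l' : is_series f l -> is_series f l' -> l = l'.
Proof. intros H1 H2. exact (filterlim_locally_unique _ _ _ H1 H2). Qed.

Lemma FE a s p L G :
  (forall n, qpoch a p n <> 0) ->
  is_series (fun n => s ^ n / qpoch a p n) L ->
  is_series (fun n => (s * p) ^ n / qpoch (a * p) p n) G ->
  (1 - s) * L = 1 + a * s / (1 - a) * G.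
Proof.
  intros Hnz HL HG.
  assert (Ha : 1 - a <> 0).
  { intro E. apply (Hnz 1%nat). simpl. replace (a * 1) with a by ring.
    rewrite E. ring. }
  set (f := fun n => s ^ n / qpoch a p n).
  assert (H1 : is_series (fun n => f (S n)) (L - 1)).
  { apply (@is_series_incr_1 C_AbsRing C_NormedModule f (L - 1)).
    assert (E0 : @plus C_NormedModule (L - 1) (f 0%nat) = L).
    { unfold f, plus; simpl. field. }
    rewrite E0. exact HL. }
  assert (H2 : is_series (fun n => scal s (f n)) (scal s L)) by exact (@is_series_scal C_AbsRing C_NormedModule s f L HL).
  assert (H3 := @is_series_minus C_AbsRing C_NormedModule _ _ _ _ H1 H2).
  assert (H4 : is_series (fun n => scal (a * s / (1 - a)) ((s * p) ^ n / qpoch (a * p) p n))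
                 (scal (a * s / (1 - a)) G)) by exact (@is_series_scal C_AbsRing C_NormedModule _ _ G HG).
  assert (E : plus (L - 1) (opp (scal s L)) = scal (a * s / (1 - a)) G).
  { apply (series_unique_C (fun n => plus (f (S n)) (opp (scal s (f n))))); auto.
    eapply is_series_ext; [|exact H4]. intros m. simpl.
    unfold f, plus, opp, scal; simpl. change (mult ?x ?y) with (x * y).
    assert (Y := Hnz m). assert (YS := Hnz (S m)).
    assert (SH := qpoch_S_shift a p m).
    change (qpoch a p (S m)) with (qpoch a p m * (1 - a * p ^ m)) in YS, SH |- *.
    assert (X : qpoch (a * p) p m = qpoch a p m * (1 - a * p ^ m) / (1 - a)).
    { rewrite SH. field. auto. }
    rewrite X, Cpow_mul_l.
    assert (1 - a * p ^ m <> 0) by (intro E; apply YS; rewrite E; ring).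
    field. repeat split; auto. }
  unfold plus, opp, scal in E; simpl in E. change (mult ?x ?y) with (x * y) in E.
  rewrite <- E. ring.
Qed.

Definition sk (p t : C) k := t * p ^ k.
Definition ak (p b : C) k := b * p ^ (S k).
Definition fk (p b t : C) k n := (sk p t k) ^ n / qpoch (ak p b k) p n.
Definition dk (p b t : C) k := ak p b k * sk p t k / ((1 - ak p b k) * (1 - sk p t k)).
Fixpoint Pk (p b t : C) N : C := match N with O => 1 | S N => Pk p b t N * dk p b t N end.
Definition Tk (p b t : C) N := Pk p b t N / (1 - sk p t N).
Fixpoint psum (f : nat -> C) N : C := match N with O => 0 | S N => psum f N + f N end.

Lemma Cmod_pow_le1 (p : C) n : (Cmod p <= 1)%R -> (Cmod (p ^ n) <= 1)%R.
Proof. intros H. rewrite Cmod_pow. rewrite <- (pow1 n). apply pow_incr. split; auto. apply Cmod_ge_0. Qed.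

Lemma sk_bound p t m k : (Cmod p <= 1)%R -> (Cmod t <= m)%R -> (Cmod (sk p t k) <= m)%R.
Proof.
  intros Hp Ht. unfold sk. rewrite Cmod_mult.
  assert (H := Cmod_pow_le1 p k Hp). assert (H0 := Cmod_ge_0 t). assert (H1 := Cmod_ge_0 (p ^ k)).
  nra.
Qed.

Lemma ak_bound p b r k j : (Cmod p <= 1)%R -> (Cmod b <= r)%R -> (Cmod (ak p b k * p ^ j) <= r)%R.
Proof.
  intros Hp Hb. unfold ak. rewrite !Cmod_mult.
  assert (H := Cmod_pow_le1 p (S k) Hp). assert (H' := Cmod_pow_le1 p j Hp).
  assert (H0 := Cmod_ge_0 b). assert (H1 := Cmod_ge_0 (p ^ S k)). assert (H2 := Cmod_ge_0 (p ^ j)).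
  apply Rle_trans with (Cmod b * 1 * 1)%R; [| lra].
  apply Rmult_le_compat; try nra.
Qed.


Lemma fk_bound p b t m k n :
  (Cmod p <= 1)%R -> (Cmod t <= m)%R -> (0 <= m)%R -> (m < 1)%R -> (Cmod b <= (1 - m) / 4)%R ->
  (Cmod (fk p b t k n) <= (m / (1 - (1 - m) / 4)) ^ n)%R.
Proof.
  intros Hp Ht Hm0 Hm1 Hb. unfold fk.
  assert (Hr : ((1 - m) / 4 < 1)%R) by lra.
  assert (Hj := fun j => ak_bound p b _ k j Hp Hb).
  assert (Hnz := qpoch_nz _ p _ n Hr Hj).
  assert (Hlow := qpoch_lower _ p _ n Hr Hj).
  rewrite Cmod_div by auto. rewrite Cmod_pow.
  unfold Rdiv at 2. rewrite Rpow_mult_distr, pow_inv.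
  assert (Hs := sk_bound p t m k Hp Ht).
  assert (0 < (1 - (1 - m) / 4) ^ n)%R by (apply pow_lt; lra).
  unfold Rdiv. apply Rmult_le_compat.
  - apply pow_le, Cmod_ge_0.
  - left. apply Rinv_0_lt_compat. lra.
  - apply pow_incr. split; [apply Cmod_ge_0|auto].
  - apply Rinv_le_contravar; lra.
Qed.

Lemma sum_n_psum (f : nat -> C) N : @sum_n C_AbelianMonoid f N = psum f (S N).
Proof.
  induction N.
  - rewrite sum_O. simpl. ring.
  - rewrite sum_Sn, IHN. simpl. reflexivity.
Qed.

Lemma psum_bound (f : nat -> C) (rho : R) N :
  (0 <= rho < 1)%R -> (forall n, Cmod (f n) <= rho ^ n)%R ->
  (Cmod (psum f N) <= (1 - rho ^ N) / (1 - rho))%R.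
Proof.
  intros Hr Hf. induction N; simpl.
  - rewrite Cmod_0. unfold Rdiv. rewrite Rminus_diag, Rmult_0_l. lra.
  - apply Rle_trans with (Cmod (psum f N) + Cmod (f N))%R. apply Cmod_triangle.
    specialize (Hf N).
    replace ((1 - rho * rho ^ N) / (1 - rho))%R with ((1 - rho ^ N) / (1 - rho) + rho ^ N)%R
      by (field; lra).
    lra.
Qed.

Lemma Cmod_sub_sym (x y : C) : Cmod (x - y) = Cmod (y - x).
Proof. replace (x - y) with (- (y - x)) by ring. apply Cmod_opp. Qed.

Lemma series_bound (f : nat -> C) (rho : R) (L : C) :
  (0 <= rho < 1)%R -> (forall n, Cmod (f n) <= rho ^ n)%R -> is_series f L ->
  (Cmod L <= / (1 - rho))%R.
Proof.
  intros Hr Hf HL.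
  destruct (Rle_or_lt (Cmod L) (/ (1 - rho))) as [H|H]; auto. exfalso.
  assert (Heps : (0 < Cmod L - / (1 - rho))%R) by lra.
  unfold is_series in HL. pose proof (proj1 (filterlim_locally_ball_norm (K := C_AbsRing) (U := C_NormedModule) (F := eventually) (sum_n f) L) HL) as HL2. clear HL. rename HL2 into HL.
  destruct (HL (mkposreal _ Heps)) as [N0 HN0].
  specialize (HN0 N0 (le_n _)). unfold ball_norm in HN0. simpl in HN0.
  change (norm (minus (sum_n f N0) L)) with (Cmod (@sum_n C_AbelianMonoid f N0 - L)) in HN0.
  rewrite sum_n_psum in HN0.
  assert (Hb := psum_bound f rho (S N0) Hr Hf).
  assert (0 <= rho ^ S N0)%R by (apply pow_le; lra).
  assert (Hb' : (Cmod (psum f (S N0)) <= / (1 - rho))%R).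
  { apply Rle_trans with (1 := Hb). unfold Rdiv. rewrite <- (Rmult_1_l (/ (1 - rho))) at 2.
    apply Rmult_le_compat_r. left; apply Rinv_0_lt_compat; lra. lra. }
  assert (Ht := Cmod_triangle (psum f (S N0)) (L - psum f (S N0))).
  replace (psum f (S N0) + (L - psum f (S N0))) with L in Ht by ring.
  rewrite Cmod_sub_sym in Ht. lra.
Qed.

Definition Hyp (p b t : C) (m : R) :=
  (Cmod p <= 1 /\ Cmod t <= m /\ 0 <= m /\ m < 1 /\ Cmod b <= (1 - m) / 4)%R.

Lemma one_minus_nz (x : C) : (Cmod x < 1)%R -> 1 - x <> 0.
Proof.
  intros H E. assert (H' := Cmod_1_minus x). rewrite E, Cmod_0 in H'. lra.
Qed.

Lemma rho_bounds m : (0 <= m)%R -> (m < 1)%R -> (0 <= m / (1 - (1 - m) / 4) < 1)%R.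
Proof.
  intros H0 H1. replace (m / (1 - (1 - m) / 4))%R with (4 * m * / (3 + m))%R by (field; lra).
  assert (0 < / (3 + m))%R by (apply Rinv_0_lt_compat; lra).
  assert (E : ((3 + m) * / (3 + m) = 1)%R) by (field; lra).
  split; nra.
Qed.

Lemma ex_fk p b t m k : Hyp p b t m -> ex_series (fk p b t k).
Proof.
  intros (Hp & Ht & Hm0 & Hm1 & Hb).
  apply (@ex_series_le C_AbsRing C_CompleteNormedModule _ (fun n => (m / (1 - (1 - m) / 4)) ^ n)%R).
  - intros n. apply (fk_bound p b t m k n); auto.
  - apply ex_series_geom. rewrite Rabs_pos_eq; apply rho_bounds; auto.
Qed.

Lemma Lk_bound p b t m k (L : C) : Hyp p b t m -> is_series (fk p b t k) L ->
  (Cmod L <= / (1 - m / (1 - (1 - m) / 4)))%R.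
Proof.
  intros H HL. destruct H as (Hp & Ht & Hm0 & Hm1 & Hb).
  apply (series_bound (fk p b t k)); auto. apply rho_bounds; auto.
  intros n. apply fk_bound; auto.
Qed.

Lemma FE_k p b t m k (L L' : C) : Hyp p b t m ->
  is_series (fk p b t k) L -> is_series (fk p b t (S k)) L' ->
  L = 1 / (1 - sk p t k) + dk p b t k * L'.
Proof.
  intros H HL HL'. destruct H as (Hp & Ht & Hm0 & Hm1 & Hb).
  assert (Hr : ((1 - m) / 4 < 1)%R) by lra.
  assert (Hj := fun j => ak_bound p b _ k j Hp Hb).
  assert (Hnz := fun n => qpoch_nz _ p _ n Hr Hj).
  assert (Ha : 1 - ak p b k <> 0).
  { apply one_minus_nz. specialize (Hj 0%nat). simpl in Hj.
    replace (ak p b k * 1) with (ak p b k) in Hj by ring. lra. }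
  assert (Hs : 1 - sk p t k <> 0).
  { apply one_minus_nz. assert (Hs := sk_bound p t m k Hp Ht). lra. }
  assert (E := FE (ak p b k) (sk p t k) p L L' Hnz HL).
  assert (HL2 : is_series (fun n => (sk p t k * p) ^ n / qpoch (ak p b k * p) p n) L').
  { eapply is_series_ext; [|exact HL']. intros n. unfold fk.
    replace (sk p t (S k)) with (sk p t k * p) by (unfold sk; simpl; ring).
    replace (ak p b (S k)) with (ak p b k * p) by (unfold ak; simpl; ring).
    reflexivity. }
  specialize (E HL2). unfold dk.
  apply (f_equal (fun x => x / (1 - sk p t k))) in E.
  replace L with ((1 - sk p t k) * L / (1 - sk p t k)) by (field; auto).
  rewrite E. field. auto.
Qed.

Lemma dk_bound p b t m k : Hyp p b t m -> (Cmod (dk p b t k) <= 1 / 3)%R.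
Proof.
  intros H. destruct H as (Hp & Ht & Hm0 & Hm1 & Hb).
  assert (Hr : ((1 - m) / 4 < 1)%R) by lra.
  assert (Ha := ak_bound p b _ k 0 Hp Hb). simpl in Ha.
  replace (ak p b k * 1) with (ak p b k) in Ha by ring.
  assert (Hs := sk_bound p t m k Hp Ht).
  assert (Ha1 := Cmod_1_minus (ak p b k)). assert (Hs1 := Cmod_1_minus (sk p t k)).
  assert (Hna := one_minus_nz (ak p b k) ltac:(lra)).
  assert (Hns := one_minus_nz (sk p t k) ltac:(lra)).
  unfold dk. rewrite Cmod_div by (apply Cmult_neq_0; auto).
  rewrite !Cmod_mult.
  set (x := Cmod (ak p b k)) in *. set (y := Cmod (sk p t k)) in *.
  set (u := Cmod (1 - ak p b k)) in *. set (v := Cmod (1 - sk p t k)) in *.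
  assert (0 <= x)%R by apply Cmod_ge_0. assert (0 <= y)%R by apply Cmod_ge_0.
  assert (Huv : (0 < u * v)%R) by nra.
  assert (0 < / (u * v))%R by (apply Rinv_0_lt_compat; lra).
  assert (E : (u * v * / (u * v) = 1)%R) by (field; lra).
  set (r := ((1 - m) / 4)%R) in *.
  assert (Hxy : (3 * (x * y) <= u * v)%R).
  { assert (x * y <= r * m)%R by nra.
    assert ((1 - r) * (1 - m) <= u * v)%R by nra.
    unfold r in *. nra. }
  unfold Rdiv. nra.
Qed.

Lemma Pk_bound p b t m N : Hyp p b t m -> (Cmod (Pk p b t N) <= (1 / 3) ^ N)%R.
Proof.
  intros H. induction N; simpl.
  - rewrite Cmod_1. lra.
  - rewrite Cmod_mult. assert (Hd := dk_bound p b t m N H).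
    rewrite Rmult_comm. apply Rmult_le_compat; auto; apply Cmod_ge_0.
Qed.

Lemma iterate p b t m N (L0 LN : C) : Hyp p b t m ->
  is_series (fk p b t 0) L0 -> is_series (fk p b t N) LN ->
  psum (Tk p b t) N + Pk p b t N * LN = L0.
Proof.
  intros H H0. revert LN. induction N; intros LN HN.
  - simpl. rewrite (series_unique_C _ _ _ HN H0). ring.
  - destruct (ex_fk p b t m N H) as [LM HM]. change C in LM.
    rewrite <- (IHN LM HM).
    rewrite (FE_k p b t m N LM LN H HM HN).
    simpl. unfold Tk. match goal with |- ?x = ?y => change (@eq C x y) end. field. apply one_minus_nz. destruct H as (Hp & Ht & _ & Hm1 & _). assert (Hs := sk_bound p t m N Hp Ht). lra.
Qed.

Lemma T_series p b t m (L0 : C) : Hyp p b t m ->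
  is_series (fk p b t 0) L0 -> is_series (Tk p b t) L0.
Proof.
  intros H H0. unfold is_series.
  apply (proj2 (filterlim_locally_ball_norm (K := C_AbsRing) (U := C_NormedModule) (F := eventually) (sum_n (Tk p b t)) L0)).
  intros eps.
  destruct H as [Hp [Ht [Hm0 [Hm1 Hb]]]].
  set (B := (/ (1 - m / (1 - (1 - m) / 4)))%R).
  assert (HB : (0 < B)%R).
  { unfold B. apply Rinv_0_lt_compat. assert (Hr := rho_bounds m Hm0 Hm1). lra. }
  assert (He : (0 < eps / B)%R) by (apply Rdiv_lt_0_compat; [apply cond_pos|auto]).
  assert (G := is_lim_seq_geom (1/3) ltac:(rewrite Rabs_pos_eq; lra)).
  apply is_lim_seq_spec in G. destruct (G (mkposreal _ He)) as [N0 HN0].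
  exists N0. intros n Hn. unfold ball_norm.
  destruct (ex_fk p b t m (S n) (conj Hp (conj Ht (conj Hm0 (conj Hm1 Hb))))) as [LS HS].
  change C in LS.
  assert (It := iterate p b t m (S n) L0 LS (conj Hp (conj Ht (conj Hm0 (conj Hm1 Hb)))) H0 HS).
  change (norm (minus (sum_n (Tk p b t) n) L0)) with (Cmod (@sum_n C_AbelianMonoid (Tk p b t) n - L0)).
  rewrite sum_n_psum.
  replace (psum (Tk p b t) (S n) - L0) with (- (Pk p b t (S n) * LS)) by (rewrite <- It; ring).
  rewrite Cmod_opp, Cmod_mult.
  assert (HP := Pk_bound p b t m (S n) (conj Hp (conj Ht (conj Hm0 (conj Hm1 Hb))))).
  assert (HL := Lk_bound p b t m (S n) LS (conj Hp (conj Ht (conj Hm0 (conj Hm1 Hb)))) HS).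
  fold B in HL.
  specialize (HN0 (S n) ltac:(lia)).
  rewrite Rminus_0_r, Rabs_pos_eq in HN0 by (apply pow_le; lra).
  assert (Hpow : ((1/3) ^ S n <= (1/3) ^ n)%R).
  { simpl. assert (0 <= (1/3)^n)%R by (apply pow_le; lra). lra. }
  apply Rle_lt_trans with ((1/3) ^ S n * B)%R.
  { apply Rmult_le_compat; auto; apply Cmod_ge_0. }
  apply Rmult_lt_compat_r with (r := B) in HN0; auto.
  simpl in HN0. replace (eps / B * B)%R with (pos eps) in HN0 by (field; lra). exact HN0.
Qed.

Lemma Cpow_mult (x : C) m n : x ^ (m * n) = (x ^ m) ^ n.
Proof.
  induction n; simpl.
  - rewrite Nat.mul_0_r. reflexivity.
  - replace (m * S n)%nat with (m + m * n)%nat by lia. rewrite Cpow_add, IHn. reflexivity.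
Qed.

Lemma Pk_closed p b t m N : Hyp p b t m ->
  Pk p b t N = b ^ N * t ^ N * p ^ (N * N) / (qpoch t p N * qpoch (b * p) p N).
Proof.
  intros H. destruct H as (Hp & Ht & Hm0 & Hm1 & Hb).
  assert (Hr : ((1 - m) / 4 < 1)%R) by lra.
  assert (Htj : forall j, (Cmod (t * p ^ j) <= m)%R) by (intro j; exact (sk_bound p t m j Hp Ht)).
  assert (Hbj : forall j, (Cmod (b * p * p ^ j) <= (1 - m) / 4)%R).
  { intro j. replace (b * p * p ^ j) with (ak p b 0 * p ^ j) by (unfold ak; simpl; ring).
    apply ak_bound; auto. }
  induction N.
  - simpl. field.
  - simpl Pk. rewrite IHN.
    assert (N1 := qpoch_nz t p m N Hm1 Htj).
    assert (N2 := qpoch_nz (b * p) p _ N Hr Hbj).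
    assert (N3 : 1 - t * p ^ N <> 0) by (apply one_minus_nz; specialize (Htj N); lra).
    assert (N4 : 1 - b * p * p ^ N <> 0) by (apply one_minus_nz; specialize (Hbj N); lra).
    change (qpoch t p (S N)) with (qpoch t p N * (1 - t * p ^ N)).
    change (qpoch (b * p) p (S N)) with (qpoch (b * p) p N * (1 - b * p * p ^ N)).
    replace (S N * S N)%nat with (N * N + (N + S N))%nat by lia.
    rewrite !Cpow_add. unfold dk, ak, sk.
    replace (1 - b * p ^ S N) with (1 - b * p * p ^ N) by (simpl; ring).
    simpl. field. repeat split; auto.
Qed.

Theorem theorem2p1 :
  forall q : C, (Cmod q < 1)%R ->
  exists r : R, (0 < r)%R /\
    forall z : C, (Cmod z < r)%R ->
      exists l : C, is_series (omega_term z q) l /\ is_series (rhs_term z q) l.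
Proof.
  intros q Hq. assert (Hq0 := Cmod_ge_0 q).
  exists ((1 - Cmod q) / 4)%R. split; [lra|].
  intros z Hz. assert (Hz0 := Cmod_ge_0 z).
  set (p := q ^ 2). set (b := z * q). set (m := Cmod q).
  assert (H : Hyp p b q m).
  { unfold Hyp, p, b, m. rewrite Cmod_pow, Cmod_mult. simpl.
    repeat split; try lra; nra. }
  assert (H' := H).
  destruct H' as (Hp & Ht & Hm0 & Hm1 & Hb).
  assert (Hr : ((1 - m) / 4 < 1)%R) by lra.
  assert (Hb1 : 1 - b <> 0) by (apply one_minus_nz; lra).
  assert (Hbj : forall j, (Cmod (b * p * p ^ j) <= (1 - m) / 4)%R).
  { intro j. replace (b * p * p ^ j) with (ak p b 0 * p ^ j) by (unfold ak; simpl; ring).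
    apply ak_bound; auto. }
  assert (Htj : forall j, (Cmod (q * p ^ j) <= m)%R) by (intro j; exact (sk_bound p q m j Hp Ht)).
  destruct (ex_fk p b q m 0 H) as [L0 HL0]. change C in L0.
  exists (/ (1 - b) * L0). split.
  - assert (HT := T_series p b q m L0 H HL0).
    apply (@is_series_scal C_AbsRing C_NormedModule (/ (1 - b))) in HT.
    eapply is_series_ext; [|exact HT]. intros n. change (@scal _ _ ?x ?y) with (x * y).
    unfold Tk, omega_term. rewrite (Pk_closed p b q m n H).
    fold p. fold b. rewrite (qpoch_S_shift b p n).
    change (qpoch q p (S n)) with (qpoch q p n * (1 - q * p ^ n)).
    assert (N1 := qpoch_nz q p m n Hm1 Htj).
    assert (N2 := qpoch_nz (b * p) p _ n Hr Hbj).
    assert (N3 : 1 - q * p ^ n <> 0) by (apply one_minus_nz; specialize (Htj n); lra).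
    unfold sk. unfold b, p. rewrite Cpow_mul_l, <- Cpow_mult.
    replace (2 * n * n + 2 * n)%nat with (2 * (n * n) + n + n)%nat by lia.
    rewrite !Cpow_add. fold p. fold b. match goal with |- ?x = ?y => change (@eq C x y) end. field. repeat split; auto.
  - apply (@is_series_scal C_AbsRing C_NormedModule (/ (1 - b))) in HL0.
    eapply is_series_ext; [|exact HL0]. intros n. change (@scal _ _ ?x ?y) with (x * y).
    unfold fk, rhs_term, sk, ak. fold p. fold b. rewrite (qpoch_S_shift b p n).
    assert (N2 := qpoch_nz (b * p) p _ n Hr Hbj).
    replace (b * p ^ 1) with (b * p) by (simpl; ring).
    replace (q * p ^ 0) with q by (simpl; ring).
    match goal with |- ?x = ?y => change (@eq C x y) end. field. auto.
Qed.
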